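(* Let $A,C$ be groups, $i_P,i_N:C\to A$ injective homomorphisms, $H=\langle A,t\mid i_N(c)=t\,i_P(c)\,t^{-1}\ \forall c\in C\rangle$, and $p:H\to\mathbb Z$ the epimorphism with $p(t)=1$, $p(A)=0$. For $k\ge0$ let $A_k\le H$ be the subgroup generated by all $t^{-i}at^{i}$ with $a\in A$, $0\le i\le k$, and let $A_{-1}=i_N(C)$. Let $w\in H$ with $p(w)=1$. Then either $w$ is conjugate to $at$ for some $a\in A$, or there is some $k\in\mathbb Z_{>0}$ and $m\ge1$ such that a conjugate of $w$ can be written as $a_1t^{-1}b_1t\cdots a_mt^{-1}b_mt\,x\,t$ with $a_i\in A_{k-1}\setminus t^{-1}A_{k-2}t$, $b_i\in A_{k-1}\setminus A_{k-2}$, and $x\in A_{k-1}$. *)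

(* Defs.v *)
From Stdlib Require Import ZArith List Lia.
Import ListNotations.
Set Implicit Arguments.

Record Group := {
  gcar :> Type;
  gmul : gcar -> gcar -> gcar;
  gone : gcar;
  ginv : gcar -> gcar;
  gassoc : forall x y z, gmul x (gmul y z) = gmul (gmul x y) z;
  gone_l : forall x, gmul gone x = x;
  gone_r : forall x, gmul x gone = x;
  ginv_l : forall x, gmul (ginv x) x = gone;
  ginv_r : forall x, gmul x (ginv x) = gone
}.

Arguments gmul {g}.
Arguments gone {g}.
Arguments ginv {g}.

Definition is_hom (G K : Group) (f : G -> K) : Prop :=
  forall x y : G, f (gmul x y) = gmul (f x) (f y).
Arguments is_hom {G K}.

Fixpoint gpow_nat (G : Group) (x : G) (n : nat) : G :=
  match n with O => gone | S n' => gmul x (gpow_nat G x n') end.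
Arguments gpow_nat {G}.
Definition gpow (G : Group) (x : G) (z : Z) : G :=
  match z with
  | Z0 => gone
  | Zpos p => gpow_nat x (Pos.to_nat p)
  | Zneg p => ginv (gpow_nat x (Pos.to_nat p))
  end.
Arguments gpow {G}.

Definition Zgroup : Group.
Proof.
  refine (@Build_Group Z Z.add 0%Z Z.opp _ _ _ _ _);
  intros; lia.
Defined.

Inductive gen (G : Group) (S : G -> Prop) : G -> Prop :=
| gen_base : forall x, S x -> gen G S x
| gen_one : gen G S gone
| gen_mul : forall x y, gen G S x -> gen G S y -> gen G S (gmul x y)
| gen_inv : forall x, gen G S x -> gen G S (ginv x).
Arguments gen {G}.

(* H (with jA : A -> H and stable letter t) is the HNN extension
   <A, t | iN(c) = t iP(c) t^-1 (c in C)>, expressed by its universal property. *)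
Definition is_HNN (A C H : Group) (iP iN : C -> A) (jA : A -> H) (t : H) : Prop :=
  is_hom jA /\
  (forall c, jA (iN c) = gmul t (gmul (jA (iP c)) (ginv t))) /\
  (forall (G : Group) (f : A -> G) (g : G),
      is_hom f ->
      (forall c, f (iN c) = gmul g (gmul (f (iP c)) (ginv g))) ->
      exists phi : H -> G,
        is_hom phi /\ (forall a, phi (jA a) = f a) /\ phi t = g /\
        forall psi : H -> G,
          is_hom psi -> (forall a, psi (jA a) = f a) -> psi t = g ->
          forall h, psi h = phi h).

(* A_k for k >= 0: generated by t^-i a t^i, a in A, 0 <= i <= k;
   A_k for k < 0: iN(C) (only k = -1 is used). *)
Definition Asub (A C H : Group) (iN : C -> A) (jA : A -> H) (t : H) (k : Z) : H -> Prop :=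
  if (0 <=? k)%Z then
    gen (fun h => exists (a : A) (i : nat),
            (Z.of_nat i <= k)%Z /\
            h = gmul (gpow t (- Z.of_nat i)) (gmul (jA a) (gpow t (Z.of_nat i))))
  else fun h => exists c : C, h = jA (iN c).

Definition conj_by (H : Group) (g x : H) : H := gmul g (gmul x (ginv g)).

Definition alt_word (H : Group) (t : H) (l : list (H * H)) : H :=
  fold_right (fun ab acc => gmul (gmul (fst ab) (gmul (ginv t) (gmul (snd ab) t))) acc)
             gone l.
Arguments is_HNN {A C H}.
Arguments Asub {A C H}.
Arguments conj_by {H}.
Arguments alt_word {H}.

(* Main.v *)
Require Import Defs.
From Stdlib Require Import ZArith List Lia Classical ProofIrrelevance.
Import ListNotations.

Section GroupFacts.
Variable G : Group.
Lemma mcl (x y : G) : gmul x (gmul (ginv x) y) = y.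
Proof. rewrite gassoc, ginv_r, gone_l. reflexivity. Qed.
Lemma icl (x y : G) : gmul (ginv x) (gmul x y) = y.
Proof. rewrite gassoc, ginv_l, gone_l. reflexivity. Qed.
Lemma inv_uniq (x y : G) : gmul x y = gone -> ginv x = y.
Proof. intro E. rewrite <- (gone_r _ (ginv x)), <- E, icl. reflexivity. Qed.
Lemma inv_one : ginv (@gone G) = gone.
Proof. apply inv_uniq, gone_l. Qed.
Lemma inv_inv (x : G) : ginv (ginv x) = x.
Proof. apply inv_uniq, ginv_l. Qed.
Lemma inv_mul (x y : G) : ginv (gmul x y) = gmul (ginv y) (ginv x).
Proof. apply inv_uniq. rewrite <- gassoc, mcl, ginv_r. reflexivity. Qed.
End GroupFacts.

Ltac gnorm := repeat first [ rewrite <- gassoc | rewrite inv_mul | rewrite inv_inv | rewrite inv_one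
  | rewrite gone_l | rewrite gone_r | rewrite ginv_r | rewrite ginv_l | rewrite mcl | rewrite icl ].

Lemma hom_one (G K : Group) (f : G -> K) : is_hom f -> f gone = gone.
Proof. intro h. assert (E := h gone gone). rewrite gone_l in E.
  transitivity (gmul (ginv (f gone)) (gmul (f gone) (f gone))).
  - rewrite icl. reflexivity.
  - rewrite <- E, ginv_l. reflexivity. Qed.
Lemma hom_inv (G K : Group) (f : G -> K) x : is_hom f -> f (ginv x) = ginv (f x).
Proof. intro h. symmetry. apply inv_uniq. rewrite <- h, ginv_r. apply hom_one; auto. Qed.
Lemma gen_mono (G : Group) (S S' : G -> Prop) h : (forall x, S x -> S' x) -> gen S h -> gen S' h.
Proof. intros HS g. induction g; [apply gen_base; auto | apply gen_one | apply gen_mul; auto | apply gen_inv; auto]. Qed.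

Section Main.
Variables (A C H : Group) (iP iN : C -> A) (jA : A -> H) (t : H).
Hypothesis hjA : is_hom jA.
Hypothesis rel : forall c, jA (iN c) = gmul t (gmul (jA (iP c)) (ginv t)).

Definition tn (i : nat) : H := gpow_nat t i.
Definition Gm (m : nat) (h : H) : Prop :=
  exists a i, i <= m /\ h = gmul (ginv (tn i)) (gmul (jA a) (tn i)).
Definition Ak m := gen (Gm m).
Definition Aprev m := Asub iN jA t (Z.of_nat m - 1).
Definition PL m (l : list (H * H)) := forall ab, In ab l -> Ak m (fst ab) /\ Ak m (snd ab).

Lemma tn_S_r i : tn (S i) = gmul (tn i) t.
Proof. induction i.
  - unfold tn; simpl. rewrite gone_r, gone_l. reflexivity.
  - change (tn (S (S i))) with (gmul t (tn (S i))). rewrite IHi at 1. rewrite gassoc. reflexivity. Qed.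

Lemma Asub_nat m h : Asub iN jA t (Z.of_nat m) h <-> Ak m h.
Proof. unfold Asub. replace (0 <=? Z.of_nat m)%Z with true by (symmetry; apply Z.leb_le; lia).
  unfold Ak; split; apply gen_mono; intros x [a [i [Hi Hx]]]; exists a, i.
  - split; [lia|]. rewrite Hx. destruct i.
    + simpl. unfold tn; simpl. rewrite inv_one. reflexivity.
    + change (- Z.of_nat (S i))%Z with (Zneg (Pos.of_succ_nat i)).
      change (Z.of_nat (S i))%Z with (Zpos (Pos.of_succ_nat i)). unfold gpow.
      rewrite SuccNat2Pos.id_succ. reflexivity.
  - split; [lia|]. rewrite Hx. destruct i.
    + simpl. unfold tn; simpl. rewrite inv_one. reflexivity.
    + change (- Z.of_nat (S i))%Z with (Zneg (Pos.of_succ_nat i)).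
      change (Z.of_nat (S i))%Z with (Zpos (Pos.of_succ_nat i)). unfold gpow.
      rewrite SuccNat2Pos.id_succ. reflexivity.
Qed.

Lemma Aprev0 h : Aprev 0 h <-> exists c, h = jA (iN c).
Proof. unfold Aprev, Asub. simpl. tauto. Qed.

Lemma AprevS m h : Aprev (S m) h <-> Ak m h.
Proof. unfold Aprev. replace (Z.of_nat (S m) - 1)%Z with (Z.of_nat m) by lia. apply Asub_nat. Qed.

Lemma Ak_mono m m' h : m <= m' -> Ak m h -> Ak m' h.
Proof. intro Hm. apply gen_mono. intros x [a [i [Hi Hx]]]. exists a, i. split; [lia|auto]. Qed.

Lemma jA_Ak m a : Ak m (jA a).
Proof. apply gen_base. exists a, 0. split; [lia|]. unfold tn; simpl. gnorm. reflexivity. Qed.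

Lemma Ak0 h : Ak 0 h -> exists a, h = jA a.
Proof. intro g. induction g.
  - destruct H0 as [a [i [Hi Hx]]]. exists a. assert (i = 0) by lia. subst. unfold tn; simpl. gnorm. reflexivity.
  - exists gone. symmetry. apply hom_one; auto.
  - destruct IHg1 as [a Ha], IHg2 as [b Hb]. exists (gmul a b). subst. symmetry. apply hjA.
  - destruct IHg as [a Ha]. exists (ginv a). subst. symmetry. apply hom_inv; auto.
Qed.

Lemma conj_Ak m h : Ak m h -> Ak (S m) (gmul (ginv t) (gmul h t)).
Proof. intro g. induction g.
  - destruct H0 as [a [i [Hi Hx]]]. apply gen_base. exists a, (S i). split; [lia|].
    subst. rewrite tn_S_r. gnorm. reflexivity.
  - replace (gmul (ginv t) (gmul gone t)) with (@gone H) by (gnorm; reflexivity). apply gen_one.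
  - replace (gmul (ginv t) (gmul (gmul x y) t)) with
      (gmul (gmul (ginv t) (gmul x t)) (gmul (ginv t) (gmul y t))) by (gnorm; reflexivity).
    apply gen_mul; auto.
  - replace (gmul (ginv t) (gmul (ginv x) t)) with (ginv (gmul (ginv t) (gmul x t))) by (gnorm; reflexivity).
    apply gen_inv; auto.
Qed.

Lemma Aprev_Ak m h : Aprev m h -> Ak m h.
Proof. destruct m.
  - intros [c ->]%Aprev0. apply jA_Ak.
  - intros Hh%AprevS. apply (Ak_mono m); auto.
Qed.

Lemma Aprev_conj m h : Aprev m h -> Ak m (gmul (ginv t) (gmul h t)).
Proof. destruct m.
  - intros [c ->]%Aprev0. rewrite rel. gnorm. apply jA_Ak.
  - intros Hh%AprevS. apply conj_Ak; auto.
Qed.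

Lemma alt_cons a b l : alt_word t ((a, b) :: l) = gmul (gmul a (gmul (ginv t) (gmul b t))) (alt_word t l).
Proof. reflexivity. Qed.
Lemma alt_nil : alt_word t [] = gone.
Proof. reflexivity. Qed.
Lemma alt_app l1 l2 : alt_word t (l1 ++ l2) = gmul (alt_word t l1) (alt_word t l2).
Proof. induction l1 as [|[a b] l1 IH]; simpl app.
  - rewrite alt_nil, gone_l. reflexivity.
  - rewrite !alt_cons, IH. gnorm. reflexivity.
Qed.

Definition Pd m z := exists l x', PL m l /\ Ak m x' /\ z = gmul (alt_word t l) x'.

Lemma Pd_left1 m y z : Ak m y -> Pd m z -> Pd m (gmul y z).
Proof. intros Hy [l [x' [Hl [Hx ->]]]]. destruct l as [|[a b] l].
  - exists [], (gmul y x'). split; [intros ab []|]. split; [apply gen_mul; auto|].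
    rewrite alt_nil. gnorm. reflexivity.
  - exists ((gmul y a, b) :: l), x'. split; [|split; auto].
    + intros ab [<-|Hin]; simpl.
      * destruct (Hl (a,b) (or_introl eq_refl)). split; [apply gen_mul|]; auto.
      * apply Hl; right; auto.
    + rewrite !alt_cons. gnorm. reflexivity.
Qed.

Lemma Pd_left2 m y z : Ak m y -> Pd m z -> Pd m (gmul (gmul (ginv t) (gmul y t)) z).
Proof. intros Hy [l [x' [Hl [Hx ->]]]]. exists ((gone, y) :: l), x'. split; [|split; auto].
  - intros ab [<-|Hin]; simpl. split; [apply gen_one|auto]. apply Hl; auto.
  - rewrite alt_cons. gnorm. reflexivity.
Qed.

Lemma Gm_class m h : Gm (S m) h -> Ak m h \/ exists y, Ak m y /\ h = gmul (ginv t) (gmul y t).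
Proof. intros [a [i [Hi Hx]]]. destruct (Nat.eq_dec i (S m)).
  - right. subst. exists (gmul (ginv (tn m)) (gmul (jA a) (tn m))). split.
    + apply gen_base. exists a, m. split; auto.
    + rewrite tn_S_r. gnorm. reflexivity.
  - left. apply gen_base. exists a, i. split; [lia|auto].
Qed.

Lemma decomp m x : Ak (S m) x -> Pd m x.
Proof. intro g.
  assert (forall z, Pd m z -> Pd m (gmul x z) /\ Pd m (gmul (ginv x) z)).
  { induction g; intros z Hz.
    - destruct (Gm_class _ _ H0) as [Hx | [y [Hy ->]]].
      + split; apply Pd_left1; auto. apply gen_inv; auto.
      + split; [apply Pd_left2; auto|].
        replace (ginv (gmul (ginv t) (gmul y t))) with (gmul (ginv t) (gmul (ginv y) t)) by (gnorm; reflexivity).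
        apply Pd_left2; auto. apply gen_inv; auto.
    - rewrite inv_one, gone_l. auto.
    - rewrite <- gassoc, inv_mul, <- gassoc. split; [apply IHg1, IHg2|apply IHg2, IHg1]; auto.
    - rewrite inv_inv. split; apply IHg; auto. }
  rewrite <- (gone_r _ x). apply H0. exists [], gone. split; [intros ab []|].
  split; [apply gen_one|]. rewrite alt_nil, gone_l. reflexivity.
Qed.

Variable p : H -> Zgroup.
Hypothesis hp : is_hom p.
Hypothesis hpt : p t = 1%Z.
Hypothesis hpA : forall a, p (jA a) = 0%Z.

Lemma p_mul x y : p (gmul x y) = (p x + p y)%Z.
Proof. apply hp. Qed.
Lemma p_inv x : p (ginv x) = (- p x)%Z.
Proof. assert (E := p_mul (ginv x) x). rewrite ginv_l, (hom_one _ _ p hp) in E. simpl in E. lia. Qed.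
Lemma p_tn j : p (tn j) = Z.of_nat j.
Proof. induction j. - apply (hom_one _ _ p hp). - change (tn (S j)) with (gmul t (tn j)). rewrite p_mul, IHj, hpt. lia. Qed.
Lemma p_Ak m h : Ak m h -> p h = 0%Z.
Proof. intro g; induction g.
  - destruct H0 as [a [i [_ ->]]]. rewrite !p_mul, p_inv, hpA. lia.
  - apply (hom_one _ _ p hp).
  - rewrite p_mul; lia.
  - rewrite p_inv; lia.
Qed.

Definition Inv h := exists j j' m c, Ak m c /\ h = gmul (tn j) (gmul c (ginv (tn j'))).

Lemma Inv_t z : Inv z -> Inv (gmul t z).
Proof. intros [j [j' [m [c [Hc ->]]]]]. exists (S j), j', m, c. split; auto.
  change (tn (S j)) with (gmul t (tn j)). gnorm. reflexivity. Qed.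

Lemma Inv_tinv z : Inv z -> Inv (gmul (ginv t) z).
Proof. intros [j [j' [m [c [Hc ->]]]]]. destruct j.
  - exists 0, (S j'), (S m), (gmul (ginv t) (gmul c t)). split; [apply conj_Ak; auto|].
    rewrite tn_S_r. unfold tn at 1 3; simpl. gnorm. reflexivity.
  - exists j, j', m, c. split; auto. change (tn (S j)) with (gmul t (tn j)). gnorm. reflexivity.
Qed.

Lemma Inv_jA a z : Inv z -> Inv (gmul (jA a) z).
Proof. intros [j [j' [m [c [Hc ->]]]]].
  exists j, j', (Nat.max j m), (gmul (gmul (ginv (tn j)) (gmul (jA a) (tn j))) c). split.
  - apply gen_mul. + apply gen_base. exists a, j. split; [lia|auto]. + apply (Ak_mono m); [lia|auto].
  - gnorm. reflexivity.
Qed.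

Hypothesis univ : forall (G : Group) (f : A -> G) (g : G),
      is_hom f ->
      (forall c, f (iN c) = gmul g (gmul (f (iP c)) (ginv g))) ->
      exists phi : H -> G,
        is_hom phi /\ (forall a, phi (jA a) = f a) /\ phi t = g /\
        forall psi : H -> G,
          is_hom psi -> (forall a, psi (jA a) = f a) -> psi t = g ->
          forall h, psi h = phi h.

Definition S0 (h : H) := (exists a, h = jA a) \/ h = t.

Definition Sub : Group.
Proof.
  refine (@Build_Group {h : H | gen S0 h}
    (fun x y => exist _ (gmul (proj1_sig x) (proj1_sig y)) (gen_mul (proj2_sig x) (proj2_sig y)))
    (exist _ gone (gen_one _ S0))
    (fun x => exist _ (ginv (proj1_sig x)) (gen_inv (proj2_sig x))) _ _ _ _ _);
  intros; apply eq_sig_hprop; try (intros; apply proof_irrelevance); simpl;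
  first [apply gassoc | apply gone_l | apply gone_r | apply ginv_l | apply ginv_r].
Defined.

Lemma all_gen h : gen S0 h.
Proof.
  destruct (univ H jA t hjA rel) as [phi0 [_ [_ [_ U0]]]].
  assert (HS : forall a, gen S0 (jA a)) by (intro a; apply gen_base; left; eauto).
  assert (Ht : gen S0 t) by (apply gen_base; right; auto).
  destruct (univ Sub (fun a => exist _ (jA a) (HS a)) (exist _ t Ht)) as [phi [hphi [phiA [phit _]]]].
  - intros x y. apply eq_sig_hprop; [intros; apply proof_irrelevance|]. simpl. apply hjA.
  - intro c. apply eq_sig_hprop; [intros; apply proof_irrelevance|]. simpl. apply rel.
  - assert (E1 := U0 (fun h => h) (fun x y => eq_refl) (fun a => eq_refl) eq_refl h).
    assert (E2 := U0 (fun h => proj1_sig (phi h))).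
    rewrite <- E2 in E1.
    + simpl in E1. rewrite E1. apply (proj2_sig (phi h)).
    + intros x y. rewrite hphi. reflexivity.
    + intro a. rewrite phiA. reflexivity.
    + rewrite phit. reflexivity.
Qed.

Lemma all_Inv h : Inv h.
Proof.
  assert (forall z, Inv z -> Inv (gmul h z) /\ Inv (gmul (ginv h) z)).
  { induction (all_gen h); intros z Hz.
    - destruct H0 as [[a ->] | ->].
      + split; [apply Inv_jA; auto|]. rewrite <- hom_inv by auto. apply Inv_jA; auto.
      + split; [apply Inv_t | apply Inv_tinv]; auto.
    - rewrite inv_one, gone_l. auto.
    - rewrite <- gassoc, inv_mul, <- gassoc. split; [apply IHg1, IHg2|apply IHg2, IHg1]; auto.
    - rewrite inv_inv. split; apply IHg; auto. }
  rewrite <- (gone_r _ h). apply H0. exists 0, 0, 0, gone. split; [apply gen_one|].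
  unfold tn; simpl. gnorm. reflexivity.
Qed.

Definition GoalW (w : H) : Prop :=
  (exists (g : H) (a : A), conj_by g w = gmul (jA a) t) \/
  (exists (k : Z) (g : H) (l : list (H * H)) (x : H),
      (0 < k)%Z /\ 1 <= length l /\
      (forall ab, In ab l ->
         Asub iN jA t (k - 1) (fst ab) /\
         ~ Asub iN jA t (k - 2) (gmul t (gmul (fst ab) (ginv t))) /\
         Asub iN jA t (k - 1) (snd ab) /\
         ~ Asub iN jA t (k - 2) (snd ab)) /\
      Asub iN jA t (k - 1) x /\
      conj_by g w = gmul (alt_word t l) (gmul x t)).

Lemma conj_comp (h g w : H) : conj_by (gmul h g) w = conj_by h (conj_by g w).
Proof. unfold conj_by. gnorm. reflexivity. Qed.

Lemma PL_l m l1 l2 : PL m (l1 ++ l2) -> PL m l1.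
Proof. intros Hl ab Hin. apply Hl, in_or_app; auto. Qed.
Lemma PL_r m l1 l2 : PL m (l1 ++ l2) -> PL m l2.
Proof. intros Hl ab Hin. apply Hl, in_or_app; auto. Qed.
Lemma PL_tl m ab l : PL m (ab :: l) -> PL m l.
Proof. intros Hl ab' Hin. apply Hl; right; auto. Qed.
Lemma PL_app m l1 l2 : PL m l1 -> PL m l2 -> PL m (l1 ++ l2).
Proof. intros H1 H2 ab Hin. apply in_app_or in Hin. destruct Hin; auto. Qed.
Lemma PL_cons m a b l : Ak m a -> Ak m b -> PL m l -> PL m ((a, b) :: l).
Proof. intros Ha Hb Hl ab [<-|Hin]; auto. Qed.

Lemma reduce m l (x g w : H) : PL m l -> Ak m x -> conj_by g w = gmul (alt_word t l) (gmul x t) ->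
  (exists a b, In (a,b) l /\ (Aprev m (gmul t (gmul a (ginv t))) \/ Aprev m b)) ->
  exists l' x' g', length l' < length l /\ PL m l' /\ Ak m x' /\
    conj_by g' w = gmul (alt_word t l') (gmul x' t).
Proof.
  intros Hl Hx E [a [b [Hin Hv]]].
  destruct (in_split _ _ Hin) as [l1 [l2 ->]].
  assert (Hab : Ak m a /\ Ak m b) by (apply (Hl (a,b)); apply in_or_app; right; left; auto).
  destruct Hab as [Ha0 Hb0].
  assert (H1 := PL_l _ _ _ Hl). assert (H2 := PL_tl _ _ _ (PL_r _ _ _ Hl)).
  destruct Hv as [Ha | Hb].
  - remember (gmul t (gmul a (ginv t))) as a'.
    assert (Ea : a = gmul (ginv t) (gmul a' t)) by (subst a'; gnorm; reflexivity).
    clear Heqa'. subst a.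
    destruct l1 as [|[a0 b0] l0 _] using rev_ind.
    + exists l2, (gmul x (gmul a' b)), (gmul (gmul (ginv t) (gmul (ginv b) (gmul (ginv a') t))) g).
      split; [simpl; lia|]. split; auto. split.
      * apply gen_mul; auto. apply gen_mul; auto. apply Aprev_Ak; auto.
      * rewrite conj_comp, E. simpl app. rewrite alt_cons. unfold conj_by. gnorm. reflexivity.
    + exists (l0 ++ (a0, gmul b0 (gmul a' b)) :: l2), x, g.
      split; [rewrite !length_app; simpl; lia|].
      assert (Hp0 : Ak m a0 /\ Ak m b0) by (apply (H1 (a0,b0)); apply in_or_app; right; left; auto).
      split; [|split; auto].
      * apply PL_app; [apply (PL_l _ _ _ H1)|]. apply PL_cons; auto; try tauto.
        apply gen_mul; [tauto|]. apply gen_mul; auto. apply Aprev_Ak; auto.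
      * rewrite E, <- app_assoc. simpl app. rewrite !alt_app, !alt_cons. gnorm. reflexivity.
  - assert (Hc : Ak m (gmul a (gmul (ginv t) (gmul b t)))) by (apply gen_mul; auto; apply Aprev_conj; auto).
    destruct l2 as [|[a2 b2] l3].
    + exists l1, (gmul (gmul a (gmul (ginv t) (gmul b t))) x), g.
      split; [rewrite !length_app; simpl; lia|]. split; auto. split; [apply gen_mul; auto|].
      rewrite E, alt_app, alt_cons, alt_nil. gnorm. reflexivity.
    + exists (l1 ++ (gmul (gmul a (gmul (ginv t) (gmul b t))) a2, b2) :: l3), x, g.
      split; [rewrite !length_app; simpl; lia|].
      assert (Hp2 : Ak m a2 /\ Ak m b2) by (apply (H2 (a2,b2)); left; auto).
      split; [|split; auto].
      * apply PL_app; auto. apply PL_cons; try tauto. apply gen_mul; tauto. apply (PL_tl _ _ _ H2).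
      * rewrite E, !alt_app, !alt_cons. gnorm. reflexivity.
Qed.

Lemma loop_gen (w : H) m (Hlev : forall x g, Ak m x -> conj_by g w = gmul (alt_word t []) (gmul x t) -> GoalW w) :
  forall n l x g, length l <= n -> PL m l -> Ak m x -> conj_by g w = gmul (alt_word t l) (gmul x t) -> GoalW w.
Proof.
  induction n; intros l x g Hlen Hl Hx E.
  - destruct l; [eapply Hlev; eauto | simpl in Hlen; lia].
  - destruct l as [|ab0 l0]; [eapply Hlev; eauto|].
    destruct (classic (exists a b, In (a,b) (ab0 :: l0) /\ (Aprev m (gmul t (gmul a (ginv t))) \/ Aprev m b))) as [V|NV].
    + destruct (reduce _ _ _ _ _ Hl Hx E V) as [l' [x' [g' [Hlt [Hl' [Hx' E']]]]]].
      apply (IHn l' x' g'); auto. lia.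
    + right. exists (Z.of_nat (S m)), g, (ab0 :: l0), x.
      replace (Z.of_nat (S m) - 1)%Z with (Z.of_nat m) by lia.
      replace (Z.of_nat (S m) - 2)%Z with (Z.of_nat m - 1)%Z by lia.
      split; [lia|]. split; [simpl; lia|]. split.
      * intros [a b] Hin. destruct (Hl _ Hin) as [Ha Hb]. simpl in *.
        split; [apply Asub_nat; auto|]. split; [intro HH; apply NV; exists a, b; split; auto; left; exact HH|].
        split; [apply Asub_nat; auto|]. intro HH; apply NV; exists a, b; split; auto; right; exact HH.
      * split; [apply Asub_nat; auto | exact E].
Qed.

Lemma loop (w : H) m : forall n l x g, length l <= n -> PL m l -> Ak m x ->
  conj_by g w = gmul (alt_word t l) (gmul x t) -> GoalW w.
Proof.
  induction m; apply loop_gen; intros x g Hx E.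
  - left. destruct (Ak0 _ Hx) as [a ->]. exists g, a. rewrite E, alt_nil, gone_l. reflexivity.
  - destruct (decomp _ _ Hx) as [l [x' [Hl [Hx' ->]]]].
    apply (IHm (length l) l x' g); auto. rewrite E, alt_nil, gone_l, <- gassoc. reflexivity.
Qed.

Lemma main (w : H) : p w = 1%Z -> GoalW w.
Proof.
  intro Hp. destruct (all_Inv w) as [j [j' [m [c [Hc Ew]]]]].
  assert (j = S j').
  { rewrite Ew, !p_mul, p_inv, !p_tn, (p_Ak _ _ Hc) in Hp. lia. }
  subst j. apply (loop w m 0 [] c (gmul c (ginv (tn j')))); auto.
  - intros ab [].
  - unfold conj_by. rewrite Ew, tn_S_r, alt_nil. gnorm. reflexivity.
Qed.

End Main.

Theorem lemma6p2 (A C H : Group) (iP iN : C -> A) (jA : A -> H) (t : H)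
  (p : H -> Zgroup) (w : H) :
  is_hom iP -> is_hom iN ->
  (forall c1 c2, iP c1 = iP c2 -> c1 = c2) ->
  (forall c1 c2, iN c1 = iN c2 -> c1 = c2) ->
  is_HNN iP iN jA t ->
  is_hom p -> p t = 1%Z -> (forall a, p (jA a) = 0%Z) ->
  p w = 1%Z ->
  (exists (g : H) (a : A), conj_by g w = gmul (jA a) t) \/
  (exists (k : Z) (g : H) (l : list (H * H)) (x : H),
      (0 < k)%Z /\ 1 <= length l /\
      (forall ab, In ab l ->
         Asub iN jA t (k - 1) (fst ab) /\
         ~ Asub iN jA t (k - 2) (gmul t (gmul (fst ab) (ginv t))) /\
         Asub iN jA t (k - 1) (snd ab) /\
         ~ Asub iN jA t (k - 2) (snd ab)) /\
      Asub iN jA t (k - 1) x /\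
      conj_by g w = gmul (alt_word t l) (gmul x t)).
Proof.
  intros _ _ _ _ [hjA [rel univ]] hp hpt hpA Hw.
  exact (main A C H iP iN jA t hjA rel p hp hpt hpA univ w Hw).
Qed.
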